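(* Let $M\ge 2N-1$. Then for a generic $M$-element frame $\mathcal F$ for $\mathbb R^N$, the map $\mathbb M^{\mathcal F}$ is injective; that is, there is an open dense subset of the set of $M$-element frames for $\mathbb R^N$ such that for every $\mathcal F=\{f_1,\dots,f_M\}$ in it, $|\langle x,f_k\rangle|=|\langle y,f_k\rangle|$ for all $k$ implies $y=\pm x$.
   Context: An $M$-element frame for $\mathbb R^N$ is a family $\{f_1,\dots,f_M\}\subset\mathbb R^N$ spanning $\mathbb R^N$ (equivalently an $N\times M$ real matrix of rank $N$), with the topology induced from its range of coefficients $W=\{(\langle x,f_k\rangle)_k : x\in\mathbb R^N\}$ in the Grassmannian $Gr(N,M)$ of $N$-dimensional subspaces of $\mathbb R^M$. $\mathbb M^{\mathcal F}:\mathbb R^N/\{\pm1\}\to\mathbb R^M$, $\mathbb M^{\mathcal F}(\hat x)=(|\langle x,f_k\rangle|)_{k=1}^M$. *)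

(* Defs.v *)
From HB Require Import structures.
From mathcomp Require Import all_boot all_order all_algebra.
From mathcomp Require Import all_classical all_reals all_analysis.
Set Implicit Arguments. Unset Strict Implicit. Unset Printing Implicit Defensive.
Import Order.TTheory GRing.Theory Num.Theory.
Import numFieldNormedType.Exports.
Local Open Scope classical_set_scope.
Local Open Scope ring_scope.

(* An M-element frame for R^N: an N x M real matrix F of rank N; its columns
   are f_1,...,f_M.  For x : 'rV_N, (x *m F) 0 k = <x, f_k>. *)
Definition is_frame {R : realType} {N M : nat} (F : 'M[R]_(N, M)) : Prop :=
  \rank F = N.

(* The range of coefficients W = { x *m F } is the row space of F.  We
   represent the point W of the Grassmannian Gr(N,M) by the orthogonal
   projection matrix of R^M onto W (a symmetric idempotent M x M matrix of
   rank N); Gr(N,M) carries the topology of these matrices in 'M[R]_M. *)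
Definition frame_proj {R : realType} {N M : nat} (F : 'M[R]_(N, M)) : 'M[R]_M :=
  F^T *m invmx (F *m F^T) *m F.

(* The set of M-element frames for R^N, with the topology induced from
   Gr(N,M) via F |-> W: open sets are the preimages of open sets. *)
Definition frame_open {R : realType} (N M : nat) (U : set 'M[R]_(N, M)) : Prop :=
  exists V : set 'M[R]_M, open V /\
    U = [set F | is_frame F /\ V (frame_proj F)].

Definition frame_dense {R : realType} (N M : nat) (U : set 'M[R]_(N, M)) : Prop :=
  forall V : set 'M[R]_M, open V ->
    (exists F : 'M[R]_(N, M), is_frame F /\ V (frame_proj F)) ->
    exists F, U F /\ V (frame_proj F).

Definition phase_retrievable {R : realType} {N M : nat} (F : 'M[R]_(N, M)) : Prop :=
  forall x y : 'rV[R]_N,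
    (forall k : 'I_M, `|(x *m F) 0 k| = `|(y *m F) 0 k|) -> y = x \/ y = - x.

(* Main.v *)
Require Import Defs.
From HB Require Import structures.
From mathcomp Require Import all_boot all_order all_algebra.
From mathcomp Require Import all_classical all_reals all_analysis.
Import Order.TTheory GRing.Theory Num.Theory.
Import numFieldNormedType.Exports.
From mathcomp Require Import zify.
Local Open Scope classical_set_scope.
Local Open Scope ring_scope.

Section Cont.
Context {R : realType}.

Lemma cont_sum {T : topologicalType} (I : Type) (r : seq I) (P : pred I)
  (F : I -> T -> R) : (forall i, continuous (F i)) ->
  continuous (fun x => \sum_(i <- r | P i) F i x).
Proof.
move=> HF x; elim: r => [|a r IH].
  under eq_fun do rewrite big_nil. exact: cvg_cst.
under eq_fun do rewrite big_cons.
case: (P a) => //.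
exact: (cvgD (HF a x) IH).
Qed.

Lemma cont_prod {T : topologicalType} (I : Type) (r : seq I) (P : pred I)
  (F : I -> T -> R) : (forall i, continuous (F i)) ->
  continuous (fun x => \prod_(i <- r | P i) F i x).
Proof.
move=> HF x; elim: r => [|a r IH].
  under eq_fun do rewrite big_nil. exact: cvg_cst.
under eq_fun do rewrite big_cons.
case: (P a) => //.
exact: (cvgM (HF a x) IH).
Qed.

Definition cmx {T : topologicalType} {m n} (A : T -> 'M[R]_(m, n)) :=
  forall i j, continuous (fun x => A x i j).

Lemma cmx_det {T : topologicalType} n (A : T -> 'M[R]_n) :
  cmx A -> continuous (fun x => \det (A x)).
Proof.
move=> HA; rewrite /determinant.
apply: cont_sum => s y.
apply: (cvgM (cvg_cst _)).
by apply: cont_prod => i; apply: HA.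
Qed.

Lemma cmx_mul {T : topologicalType} m n p (A : T -> 'M[R]_(m, n))
  (B : T -> 'M[R]_(n, p)) : cmx A -> cmx B -> cmx (fun x => A x *m B x).
Proof.
move=> HA HB i j; under eq_fun do rewrite mxE.
apply: cont_sum => k y; exact: (cvgM (HA i k y) (HB k j y)).
Qed.

Lemma cmx_tr {T : topologicalType} m n (A : T -> 'M[R]_(m, n)) :
  cmx A -> cmx (fun x => (A x)^T).
Proof. by move=> HA i j; under eq_fun do rewrite mxE; apply: HA. Qed.

Lemma cmx_cst {T : topologicalType} m n (A : 'M[R]_(m, n)) :
  cmx (fun _ : T => A).
Proof. by move=> i j y; apply: cvg_cst. Qed.

Lemma cmx_sub {T : topologicalType} m n m' n' (f : 'I_m' -> 'I_m)
  (g : 'I_n' -> 'I_n) (A : T -> 'M[R]_(m, n)) :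
  cmx A -> cmx (fun x => mxsub f g (A x)).
Proof. by move=> HA i j; under eq_fun do rewrite mxE; apply: HA. Qed.

Lemma cmx_adj {T : topologicalType} n (A : T -> 'M[R]_n) :
  cmx A -> cmx (fun x => \adj (A x)).
Proof.
move=> HA i j; under eq_fun do rewrite /adjugate mxE /cofactor.
move=> y; apply: (cvgM (cvg_cst _)).
apply: (@cmx_det _ _ (fun x => row' j (col' i (A x)))) => k l z.
under eq_fun do rewrite !mxE.
exact: HA.
Qed.

End Cont.
Section Alg.
Variables (R : realType) (N M : nat).

Lemma frame_unit (F : 'M[R]_(N, M)) : row_free F -> F *m F^T \in unitmx.
Proof.
move=> rF; rewrite -row_free_unit -kermx_eq0.
apply/eqP/row_matrixP => i; rewrite row0.
set x := row i _.
have hx : x *m (F *m F^T) = 0 by rewrite /x -row_mul mulmx_ker row0.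
set y := x *m F.
have hy : y = 0.
  have : (y *m y^T) 0 0 = 0.
    by rewrite /y trmx_mul mulmxA -(mulmxA x) hx mul0mx mxE.
  rewrite mxE => h0.
  have h1 : forall k, y 0 k * y 0 k = 0.
    move=> k; apply: (psumr_eq0P (P := xpredT) (F := fun k => y 0 k * y 0 k)) => //.
      by move=> j _; rewrite -expr2 sqr_ge0.
    by rewrite -[RHS]h0; apply: eq_bigr => j _; rewrite [y^T _ _]mxE.
  have h2 : forall k, y 0 k = 0 by move=> k; apply/eqP; move: (h1 k) => /eqP; rewrite mulf_eq0 orbb.
  by apply/rowP => k; rewrite h2 mxE.
by apply/eqP; rewrite -(mulmx_free_eq0 _ rF); apply/eqP.
Qed.

Definition fspark (F : 'M[R]_(N, M)) := forall f : {ffun 'I_N -> 'I_M},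
  injectiveb f -> \det (colsub f F) != 0.

Definition Vset : set 'M[R]_M := [set P | forall f : {ffun 'I_N -> 'I_M},
  injectiveb f -> exists g : {ffun 'I_N -> 'I_M},
    \det (rowsub g (colsub f P)) != 0].

Lemma Vset_fspark (F : 'M[R]_(N, M)) : Vset (frame_proj F) -> fspark F.
Proof.
move=> HV f hf; have [g hg] := HV f hf.
move: hg; rewrite /frame_proj -mulmx_colsub -mul_rowsub_mx det_mulmx.
by rewrite mulf_eq0 negb_or => /andP[].
Qed.

Lemma inj_exists (S : {set 'I_M}) : (N <= #|S|)%N ->
  exists f : {ffun 'I_N -> 'I_M}, injectiveb f /\ forall i, f i \in S.
Proof.
move=> hS.
exists [ffun i => enum_val (widen_ord hS i)]; split.
  apply/injectiveP => i j; rewrite !ffunE => /enum_val_inj/(congr1 val) /= h.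
  exact: val_inj.
by move=> i; rewrite ffunE; apply: enum_valP.
Qed.

Lemma fspark_frame (F : 'M[R]_(N, M)) : (N <= M)%N -> fspark F ->
  is_frame F /\ F *m F^T \in unitmx.
Proof.
move=> hNM hF.
have hf : injectiveb [ffun i : 'I_N => widen_ord hNM i].
  apply/injectiveP => i j; rewrite !ffunE => /(congr1 val) /= h; exact: val_inj.
have hu : colsub [ffun i : 'I_N => widen_ord hNM i] F \in unitmx.
  by rewrite unitmxE unitfE; apply: hF.
have rF : \rank F = N.
  apply/eqP; rewrite eqn_leq rank_leq_row /=.
  rewrite -{1}(mxrank_unit hu).
  have -> : colsub [ffun i : 'I_N => widen_ord hNM i] F =
     F *m colsub [ffun i : 'I_N => widen_ord hNM i] 1%:M.
    by rewrite mulmx_colsub mulmx1.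
  exact: mxrankM_maxl.
split => //; apply: frame_unit; by rewrite /row_free rF.
Qed.

Lemma fspark_Vset (F : 'M[R]_(N, M)) : (N <= M)%N -> fspark F ->
  is_frame F /\ Vset (frame_proj F).
Proof.
move=> hNM hF; have [fr hu] := fspark_frame _ hNM hF; split => // f hf.
exists f.
rewrite /frame_proj -mulmx_colsub -!mul_rowsub_mx !det_mulmx.
have -> : rowsub f F^T = (colsub f F)^T by apply/matrixP => i j; rewrite !mxE.
rewrite det_tr det_inv !mulf_neq0 //; first exact: hF.
  by rewrite invr_eq0 -unitfE -unitmxE.
exact: hF.
Qed.

Lemma fspark_pr (F : 'M[R]_(N, M)) : (2 * N - 1 <= M)%N -> fspark F ->
  phase_retrievable F.
Proof.
move=> hM hF x y H.
pose S : {set 'I_M} := [set k | (x *m F) 0 k == (y *m F) 0 k]%SET.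
have key : forall (z : 'rV[R]_N) (f : {ffun 'I_N -> 'I_M}), injectiveb f ->
    (forall i, (z *m F) 0 (f i) = 0) -> z = 0.
  move=> z f hf hz.
  have hu : colsub f F \in unitmx by rewrite unitmxE unitfE; apply: hF.
  apply/eqP; rewrite -(mulmx_free_eq0 _ (B := colsub f F)); last by rewrite row_free_unit.
  apply/eqP/rowP => j; rewrite mulmx_colsub mxE [RHS]mxE; exact: hz.
case: (leqP N #|S|) => hS.
  have [f [hf hfS]] := inj_exists _ hS.
  left; apply/eqP; rewrite -subr_eq0; apply/eqP; apply: (key _ f hf) => i.
  rewrite mulmxBl [LHS]mxE [X in _ + X]mxE; move: (hfS i); rewrite inE => /eqP ->.
  exact: subrr.
have hC : (N <= #|~: S|)%N.
  have := cardsC S; rewrite card_ord => h.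
  lia.
have [f [hf hfS]] := inj_exists _ hC.
right; apply/eqP; rewrite -addr_eq0 addrC; apply/eqP; apply: (key _ f hf) => i.
rewrite mulmxDl [LHS]mxE; move: (hfS i); rewrite !inE => hne.
have := H (f i); move/eqP; rewrite eqr_norm2 (negbTE hne) /= => /eqP ->.
exact: addNr.
Qed.
End Alg.
Arguments fspark {R N M}.
Arguments frame_unit {R N M F}.
Arguments Vset_fspark {R N M F}.
Arguments fspark_frame {R N M F}.
Arguments fspark_Vset {R N M F}.
Arguments fspark_pr {R N M F}.

Lemma small_nonroot (R : realType) (Q : {poly R}) (e : R) :
  Q != 0 -> 0 < e -> exists t, (0 < t < e) /\ Q.[t] != 0.
Proof.
move=> Q0 e0.
case: (pselect (exists t, (0 < t < e) /\ Q.[t] != 0)) => // hn; exfalso.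
pose rs := [seq e / (k.+2)%:R | k <- iota 0 (size Q)].
have := @max_poly_roots _ Q rs Q0.
have -> : all (root Q) rs.
  apply/allP => r /mapP [k _ ->]; apply/negPn/negP => hr; apply: hn.
  exists (e / (k.+2)%:R); split => //.
  rewrite divr_gt0 ?ltr0n //= ltr_pdivrMr ?ltr0n // ltr_pMr // ltr1n //.
have -> : uniq rs.
  rewrite map_inj_uniq ?iota_uniq // => a b /= h.
  have h2 : ((a.+2)%:R : R) = (b.+2)%:R.
    apply: invr_inj; apply: (mulfI (x := e)) => //; by rewrite gt_eqF.
  by apply/eqP; rewrite -2!eqSS -(eqr_nat R); apply/eqP.
by move=> /(_ isT isT); rewrite size_map size_iota ltnn.
Qed.

Lemma Vset_open (R : realType) (N M : nat) : open (Vset R N M).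
Proof.
rewrite openE => P HP.
have H : forall f : {ffun 'I_N -> 'I_M}, exists g : {ffun 'I_N -> 'I_M},
    injectiveb f -> \det (rowsub g (colsub f P)) != 0.
  move=> f; case: (boolP (injectiveb f)) => hf.
    by have [g hg] := HP f hf; exists g.
  by exists f.
have [g Hg] := choice H.
apply: (@filterS _ _ _ [set Q | forall f : {ffun 'I_N -> 'I_M}, injectiveb f ->
     \det (rowsub (g f) (colsub f Q)) != 0]).
  by move=> Q HQ f hf; exists (g f); apply: HQ.
apply: (@filter_forall _ _ (fun f : {ffun 'I_N -> 'I_M} => [set Q : 'M[R]_M | injectiveb f -> \det (rowsub (g f) (colsub f Q)) != 0]) (nbhs P) _) => f.
case: (boolP (injectiveb f)) => hf; last first.
  by apply: filterE.
have hc : continuous (fun Q : 'M[R]_M => \det (rowsub (g f) (colsub f Q))).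
  apply: cmx_det => i j; under eq_fun do rewrite !mxE.
  exact: coord_continuous.
have hn : nbhs (\det (rowsub (g f) (colsub f P))) [set z : R | z != 0].
  by have := @open_neq R 0; rewrite openE => /(_ _ (Hg f hf)).
have hcP : nbhs P ((fun Q : 'M[R]_M => \det (rowsub (g f) (colsub f Q))) @^-1` [set z : R | z != 0]) := hc P _ hn.
by apply: (filterS _ hcP) => Q hQ _.
Qed.

Lemma Vset_dense (R : realType) (N M : nat) : (2 * N - 1 <= M)%N ->
  forall V : set 'M[R]_M, open V ->
  (exists F : 'M[R]_(N, M), is_frame F /\ V (frame_proj F)) ->
  exists F : 'M[R]_(N, M), (is_frame F /\ Vset R N M (frame_proj F)) /\ V (frame_proj F).
Proof.
move=> hM V oV [F0 [fr0 hV0]].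
have hNM : (N <= M)%N by lia.
pose A : 'M[R]_(N, M) := \matrix_(i, j) (((j : nat).+1)%:R ^+ i).
have hA : fspark A.
  move=> f hf.
  have -> : colsub f A = Vandermonde N (\row_j (((f j : nat).+1)%:R) : 'rV[R]_N).
    by apply/matrixP => i j; rewrite !mxE.
  rewrite det_Vandermonde; apply/prodf_neq0 => i _; apply/prodf_neq0 => j hij.
  move/injectiveP: hf => finj.
  rewrite !mxE subr_eq0 eqr_nat eqSS; apply/negP => /eqP/val_inj/finj hji.
  by rewrite hji ltnn in hij.
pose Ft (t : R) : 'M[R]_(N, M) := F0 + t *: (A - F0).
pose pF : 'M[{poly R}]_(N, M) :=
  \matrix_(i, j) ((F0 i j)%:P + 'X * ((A i j - F0 i j)%:P)).
have hpF t : map_mx (horner_eval t) pF = Ft t.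
  by apply/matrixP => i j; rewrite !mxE /horner_eval !hornerE.
pose Q := \prod_(f : {ffun 'I_N -> 'I_M} | injectiveb f) \det (colsub f pF).
have hQ t : horner_eval t Q = \prod_(f : {ffun 'I_N -> 'I_M} | injectiveb f) \det (colsub f (Ft t)).
  rewrite rmorph_prod; apply: eq_bigr => f _.
  by rewrite -det_map_mx map_mxsub hpF.
have Ft1 : Ft 1 = A by rewrite /Ft scale1r addrC subrK.
have Q0 : Q != 0.
  apply/negP => /eqP Q0; have := hQ 1; rewrite Q0 rmorph0 Ft1 => /esym/eqP.
  by apply/negP; apply/prodf_neq0 => f hf; exact: hA.
pose B t := Ft t *m (Ft t)^T.
pose d t := \det (B t).
pose K t := (Ft t)^T *m \adj (B t) *m Ft t.
have cF : cmx Ft.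
  move=> i j; under eq_fun do rewrite !mxE.
  move=> t; exact: (cvgD (cvg_cst _) (cvgM cvg_id (cvg_cst _))).
have cB : cmx B by apply: cmx_mul => //; apply: cmx_tr.
have cd : continuous d by apply: cmx_det.
have cK : cmx K.
  apply: cmx_mul => //; apply: cmx_mul; [exact: cmx_tr | exact: cmx_adj].
have F00 : Ft 0 = F0 by rewrite /Ft scale0r addr0.
have hu0 : B 0 \in unitmx.
  by rewrite /B F00; apply: frame_unit; rewrite /row_free fr0.
have hd0 : d 0 != 0 by rewrite -unitfE -unitmxE.
have hproj t : B t \in unitmx -> frame_proj (Ft t) = (d t)^-1 *: K t.
  by move=> hu; rewrite /frame_proj /invmx -/(B t) hu -scalemxAr -scalemxAl.
have hV : nbhs ((d 0)^-1 *: K 0) V.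
  by rewrite -hproj // F00; move: oV; rewrite openE => /(_ _ hV0).
case: hV => Pf hPf sub.
have hE : \forall t \near (0 : R), forall i j, Pf i j ((d t)^-1 * K t i j).
  apply: (@filter_forall _ _ (fun i => [set t : R | forall j, Pf i j ((d t)^-1 * K t i j)]) (nbhs (0:R)) _) => i.
  apply: (@filter_forall _ _ (fun j => [set t : R | Pf i j ((d t)^-1 * K t i j)]) (nbhs (0:R)) _) => j.
  have hc : (fun t => (d t)^-1 * K t i j) @ (0 : R) --> (d 0)^-1 * K 0 i j.
    apply: cvgM; [apply: cvgV => //; exact: cd | exact: cK].
  apply: hc; have := hPf i j; by rewrite mxE.
move: hE => /nbhs_ballP [e e0 he].
have [t [ht Qt]] := small_nonroot _ _ _ Q0 e0.
have hFt : fspark (Ft t).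
  move=> f hf; move: Qt; rewrite -[Q.[t]]/(horner_eval t Q) hQ.
  by move/prodf_neq0; apply.
have [fr hVt] := fspark_Vset hNM hFt.
have [_ hu] := fspark_frame hNM hFt.
exists (Ft t); split => //.
rewrite hproj //; apply: sub => i j; rewrite mxE; apply: he.
rewrite -ball_normE /ball_ /= sub0r normrN gtr0_norm //; by case/andP: ht.
Qed.

Theorem theorem2p2 (R : realType) (N M : nat) :
  (2 * N - 1 <= M)%N ->
  exists U : set 'M[R]_(N, M),
    U `<=` [set F | is_frame F] /\ frame_open U /\ frame_dense U /\
    (forall F, U F -> phase_retrievable F).
Proof.
move=> hM.
exists [set F | is_frame F /\ Vset R N M (frame_proj F)].
split; first by move=> F [].
split; first by exists (Vset R N M); split => //; exact: Vset_open.
split; first by move=> V oV hex; exact: Vset_dense hM V oV hex.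
move=> F [_ hV]; exact: fspark_pr hM (Vset_fspark hV).
Qed.
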